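(* Let $x\in\{0,1,2,3\}^n$. Let $x'$ be the subsequence of $x$ obtained by deleting all $1$'s and $3$'s, and $x''$ the subsequence obtained by deleting all $0$'s and $2$'s. If every maximal run of $0$'s in $x'$ and every maximal run of $3$'s in $x''$ has length at most $\log n+3$, then $x$ is regular.
   Context: Logarithms are base $2$. Define the weight $w:\{0,1,2,3\}\to\mathbb{R}$ by $w(0)=0$, $w(1)=1$, $w(2)=2\log n+11$, $w(3)=2\log n+12$. A string $x\in\{0,1,2,3\}^n$ is regular if for every symbol $a\in\{0,1,2,3\}$ and all $1\le j\le k\le n$ such that some $i\in[j,k]$ has $x_i\ne a$, it holds that $\sum_{i=j}^k (w(x_i)-w(a))\neq 0$. *)

(* Defs.v *)
From Stdlib Require Import Reals Lra Lia List Arith.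
Import ListNotations.
Open Scope R_scope.

Definition log2R (n : nat) : R := ln (INR n) / ln 2.

Definition w (n a : nat) : R :=
  match a with
  | 0%nat => 0
  | 1%nat => 1
  | 2%nat => 2 * log2R n + 11
  | _ => 2 * log2R n + 12
  end.

(* a string over {0,1,2,3}: a list of naturals all < 4; positions are 0-based *)
Definition is_string (x : list nat) : Prop := Forall (fun a => (a < 4)%nat) x.

Definition sum_range (j k : nat) (f : nat -> R) : R :=
  fold_right Rplus 0 (map f (seq j (S k - j))).

Definition regular (x : list nat) : Prop :=
  let n := length x in
  forall (a : nat), (a < 4)%nat ->
  forall (j k : nat), (j <= k)%nat -> (k < n)%nat ->
  (exists i, (j <= i <= k)%nat /\ nth i x 0%nat <> a) ->
  sum_range j k (fun i => w n (nth i x 0%nat) - w n a) <> 0.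

Definition max_run (l : list nat) (c j k : nat) : Prop :=
  (j <= k)%nat /\ (k < length l)%nat /\
  (forall i, (j <= i <= k)%nat -> nth i l 0%nat = c) /\
  (j = 0%nat \/ nth (j - 1) l 0%nat <> c) /\
  (S k = length l \/ nth (S k) l 0%nat <> c).

Definition del13 (x : list nat) : list nat :=
  filter (fun a => orb (Nat.eqb a 0) (Nat.eqb a 2)) x.
Definition del02 (x : list nat) : list nat :=
  filter (fun a => orb (Nat.eqb a 1) (Nat.eqb a 3)) x.

(* Main.v *)
Require Import Defs.
From Stdlib Require Import Reals List Arith Lra Lia.
Import ListNotations.
Open Scope R_scope.

Fixpoint cnt (b : nat) (s : list nat) : nat :=
  match s with [] => 0%nat | y :: s' => ((if Nat.eqb y b then 1 else 0) + cnt b s')%nat end.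

Definition blk (l : list nat) (c : nat) (B : R) : Prop :=
  forall A S C, l = A ++ S ++ C -> Forall (fun y => y = c) S -> INR (length S) <= B.

Lemma blk_infix A' l C' c B : blk (A' ++ l ++ C') c B -> blk l c B.
Proof.
  intros H A S C Hl HS. apply (H (A' ++ A) S (C ++ C')); auto.
  rewrite Hl. rewrite !app_assoc. reflexivity.
Qed.

Lemma ext_left (l : list nat) c k0 : forall j0,
  (forall i, (j0 <= i <= k0)%nat -> nth i l 0%nat = c) ->
  exists j, (j <= j0)%nat /\ (forall i, (j <= i <= k0)%nat -> nth i l 0%nat = c) /\
    (j = 0%nat \/ nth (j - 1) l 0%nat <> c).
Proof.
  induction j0; intros H.
  - exists 0%nat; split; [lia|split; auto].
  - destruct (Nat.eq_dec (nth j0 l 0%nat) c) as [e|ne].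
    + destruct IHj0 as [j [Hj1 [Hj2 Hj3]]].
      * intros i Hi. destruct (Nat.eq_dec i j0); [subst; auto| apply H; lia].
      * exists j; split; [lia|auto].
    + exists (S j0); split; [lia|split; auto]. right. simpl. rewrite Nat.sub_0_r. auto.
Qed.

Lemma ext_right (l : list nat) c j : forall m k0, (length l - k0 = m)%nat -> (k0 < length l)%nat ->
  (forall i, (j <= i <= k0)%nat -> nth i l 0%nat = c) ->
  exists k, (k0 <= k < length l)%nat /\ (forall i, (j <= i <= k)%nat -> nth i l 0%nat = c) /\
    (S k = length l \/ nth (S k) l 0%nat <> c).
Proof.
  induction m; intros k0 Hm Hk H; [lia|].
  destruct (Nat.eq_dec (S k0) (length l)) as [e|ne].
  - exists k0; split; [lia|split; auto].
  - destruct (Nat.eq_dec (nth (S k0) l 0%nat) c) as [e|ne2].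
    + destruct (IHm (S k0)) as [k [Hk1 [Hk2 Hk3]]]; try lia.
      * intros i Hi. destruct (Nat.eq_dec i (S k0)); [subst; auto| apply H; lia].
      * exists k; split; [lia|auto].
    + exists k0; split; [lia|split; auto].
Qed.

Lemma blk_of_maxrun l c B : 0 <= B ->
  (forall j k, max_run l c j k -> INR (S k - j) <= B) -> blk l c B.
Proof.
  intros HB H A S C Hl HS. destruct S as [|y S'].
  - simpl. lra.
  - assert (Hall : forall i, (length A <= i <= length A + length S')%nat -> nth i l 0%nat = c).
    { intros i Hi. rewrite Hl. rewrite app_nth2 by lia. rewrite app_nth1 by (simpl; lia).
      rewrite Forall_forall in HS. apply HS. apply nth_In. simpl; lia. }
    assert (Hlen : length l = (length A + S (length S') + length C)%nat).
    { rewrite Hl, !length_app. simpl. lia. }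
    destruct (ext_left l c _ _ Hall) as [j [Hj1 [Hj2 Hj3]]].
    destruct (ext_right l c j _ (length A + length S')%nat eq_refl ltac:(lia) Hj2) as [k [Hk1 [Hk2 Hk3]]].
    assert (Hm : max_run l c j k) by (repeat split; auto; lia).
    specialize (H j k Hm).
    assert (INR (length (y :: S')) <= INR (S k - j)) by (apply le_INR; cbn [length]; lia).
    lra.
Qed.

Lemma count_gen c d B : c <> d -> forall S T, Forall (fun y => y = c) T ->
  Forall (fun y => y = c \/ y = d) S -> blk (T ++ S) c B ->
  INR (length T + cnt c S) <= (INR (cnt d S) + 1) * B.
Proof.
  intros Hcd. induction S as [|y U IH]; intros T HT HS Hb.
  - simpl. rewrite Nat.add_0_r. apply (Hb [] T []) in HT; [lra|]. rewrite app_nil_r. reflexivity.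
  - inversion HS as [|? ? Hy HU]; subst. destruct Hy as [->| ->].
    + simpl. rewrite Nat.eqb_refl. destruct (Nat.eqb_spec c d); [congruence|].
      replace (length T + (1 + cnt c U))%nat with (length (T ++ [c]) + cnt c U)%nat
        by (rewrite length_app; simpl; lia).
      apply IH; auto.
      * apply Forall_app; split; auto.
      * rewrite <- app_assoc. exact Hb.
    + cbn [cnt]. rewrite Nat.eqb_refl. destruct (Nat.eqb_spec d c); [congruence|]. cbn [Nat.add].
      assert (H1 : INR (length T) <= B).
      { apply (Hb [] T (d :: U)); auto. }
      assert (H2 : INR (0 + cnt c U) <= (INR (cnt d U) + 1) * B).
      { apply (IH []); auto. eapply (blk_infix (T ++ [d]) U []).
        rewrite app_nil_r, <- app_assoc. exact Hb. }
      rewrite plus_INR. cbn [Nat.add] in H2. rewrite S_INR. lra.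
Qed.

Lemma skipn_nth (x : list nat) : forall j, (j < length x)%nat -> skipn j x = nth j x 0%nat :: skipn (S j) x.
Proof.
  induction x; intros [|j] H; simpl in *; try lia; auto.
  apply IHx; lia.
Qed.

Lemma seg_eq (x : list nat) : forall len j, (j + len <= length x)%nat ->
  firstn len (skipn j x) = map (fun i => nth i x 0%nat) (seq j len).
Proof.
  induction len; intros j H; [reflexivity|].
  rewrite (skipn_nth x j) by lia. cbn [firstn seq map]. f_equal. apply IHlen; lia.
Qed.

Lemma sum_formula (g : nat -> R) s : Forall (fun a => (a < 4)%nat) s ->
  fold_right Rplus 0 (map g s) =
  INR (cnt 0 s) * g 0%nat + INR (cnt 1 s) * g 1%nat + INR (cnt 2 s) * g 2%nat + INR (cnt 3 s) * g 3%nat.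
Proof.
  induction s as [|a s IH]; intros H; simpl; [ring|].
  inversion H; subst. rewrite IH by auto.
  destruct a as [|[|[|[|]]]]; try lia; cbn [cnt map fold_right Nat.eqb Nat.add]; repeat rewrite S_INR; ring.
Qed.

Lemma cnt_In b s : In b s -> (1 <= cnt b s)%nat.
Proof.
  induction s; simpl; intros H; [contradiction|destruct H as [H|H]].
  - subst. rewrite Nat.eqb_refl. lia.
  - specialize (IHs H). lia.
Qed.

Lemma cnt_del13 s : cnt 0 (del13 s) = cnt 0 s /\ cnt 2 (del13 s) = cnt 2 s.
Proof.
  induction s as [|a s IH]; simpl; auto.
  destruct a as [|[|[|[|]]]]; simpl; lia.
Qed.

Lemma cnt_del02 s : cnt 3 (del02 s) = cnt 3 s /\ cnt 1 (del02 s) = cnt 1 s.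
Proof.
  induction s as [|a s IH]; simpl; auto.
  destruct a as [|[|[|[|]]]]; simpl; lia.
Qed.

Lemma del13_vals s : Forall (fun y => y = 0%nat \/ y = 2%nat) (del13 s).
Proof.
  apply Forall_forall. intros y Hy. unfold del13 in Hy. apply filter_In in Hy.
  destruct Hy as [_ Hy]. apply Bool.orb_true_iff in Hy.
  destruct Hy as [Hy|Hy]; apply Nat.eqb_eq in Hy; auto.
Qed.

Lemma del02_vals s : Forall (fun y => y = 3%nat \/ y = 1%nat) (del02 s).
Proof.
  apply Forall_forall. intros y Hy. unfold del02 in Hy. apply filter_In in Hy.
  destruct Hy as [_ Hy]. apply Bool.orb_true_iff in Hy.
  destruct Hy as [Hy|Hy]; apply Nat.eqb_eq in Hy; auto.
Qed.

Lemma log2R_nonneg n : (1 <= n)%nat -> 0 <= log2R n.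
Proof.
  intros H. unfold log2R, Rdiv. apply Rmult_le_pos.
  - apply le_INR in H. simpl in H. destruct (Rle_lt_or_eq_dec 1 (INR n) H) as [h|h].
    + rewrite <- ln_1. left. apply ln_increasing; lra.
    + rewrite <- h, ln_1. lra.
  - left. apply Rinv_0_lt_compat. rewrite <- ln_1. apply ln_increasing; lra.
Qed.

Lemma zero_or_one (c : nat) L : 0 <= L ->
  (INR c = 0 /\ INR c * L = 0) \/ (1 <= INR c /\ 0 <= (INR c - 1) * L).
Proof.
  intros HL. destruct c.
  - left. simpl. split; ring.
  - right. rewrite S_INR. pose proof (pos_INR c). split; [lra|].
    apply Rmult_le_pos; lra.
Qed.

Theorem lemma1 (x : list nat) :
  is_string x ->
  (forall j k, max_run (del13 x) 0 j k ->
     INR (S k - j) <= log2R (length x) + 3) ->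
  (forall j k, max_run (del02 x) 3 j k ->
     INR (S k - j) <= log2R (length x) + 3) ->
  regular x.
Proof.
  intros Hstr H13 H02 a Ha j k Hjk Hk [i [Hi Hne]].
  assert (HL : 0 <= log2R (length x)) by (apply log2R_nonneg; lia).
  set (L := log2R (length x)) in *.
  set (s := map (fun i => nth i x 0%nat) (seq j (S k - j))).
  assert (Hsum : sum_range j k (fun i => w (length x) (nth i x 0%nat) - w (length x) a)
          = fold_right Rplus 0 (map (fun b => w (length x) b - w (length x) a) s)).
  { unfold sum_range, s. rewrite map_map. reflexivity. }
  assert (Hs4 : Forall (fun a => (a < 4)%nat) s).
  { apply Forall_forall. intros y Hy. unfold s in Hy. apply in_map_iff in Hy.
    destruct Hy as [i' [<- Hi']]. apply in_seq in Hi'. unfold is_string in Hstr.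
    rewrite Forall_forall in Hstr. apply Hstr. apply nth_In. lia. }
  assert (Hx : x = firstn j x ++ s ++ skipn (S k) x).
  { unfold s. rewrite <- seg_eq by lia.
    rewrite <- (firstn_skipn j x) at 1. f_equal.
    rewrite <- (firstn_skipn (S k - j) (skipn j x)) at 1. f_equal.
    rewrite skipn_skipn. f_equal. lia. }
  assert (Hb : In (nth i x 0%nat) s).
  { unfold s. apply (in_map (fun i => nth i x 0%nat)). apply in_seq. lia. }
  assert (Hb4 : (nth i x 0%nat < 4)%nat).
  { rewrite Forall_forall in Hs4. auto. }
  apply cnt_In in Hb.
  assert (B13 : INR (cnt 0 s) <= (INR (cnt 2 s) + 1) * (L + 3)).
  { destruct (cnt_del13 s) as [E0 E2]. rewrite <- E0, <- E2.
    change (INR (0 + cnt 0 (del13 s)) <= (INR (cnt 2 (del13 s)) + 1) * (L + 3)).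
    apply (count_gen 0 2 (L+3) ltac:(lia) (del13 s) []); auto using del13_vals.
    simpl. apply (blk_infix (del13 (firstn j x)) _ (del13 (skipn (S k) x))).
    unfold del13. rewrite <- !filter_app. fold (del13 x). rewrite <- Hx.
    apply blk_of_maxrun; [lra|exact H13]. }
  assert (B02 : INR (cnt 3 s) <= (INR (cnt 1 s) + 1) * (L + 3)).
  { destruct (cnt_del02 s) as [E0 E2]. rewrite <- E0, <- E2.
    change (INR (0 + cnt 3 (del02 s)) <= (INR (cnt 1 (del02 s)) + 1) * (L + 3)).
    apply (count_gen 3 1 (L+3) ltac:(lia) (del02 s) []); auto using del02_vals.
    simpl. apply (blk_infix (del02 (firstn j x)) _ (del02 (skipn (S k) x))).
    unfold del02. rewrite <- !filter_app. fold (del02 x). rewrite <- Hx.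
    apply blk_of_maxrun; [lra|exact H02]. }
  rewrite Hsum, sum_formula by exact Hs4.
  destruct (zero_or_one (cnt 0 s) L HL) as [[Z0 P0]|[Z0 P0]];
  destruct (zero_or_one (cnt 1 s) L HL) as [[Z1 P1]|[Z1 P1]];
  destruct (zero_or_one (cnt 2 s) L HL) as [[Z2 P2]|[Z2 P2]];
  destruct (zero_or_one (cnt 3 s) L HL) as [[Z3 P3]|[Z3 P3]];
  (destruct (nth i x 0%nat) as [|[|[|[|]]]]; [| | | |lia]);
  apply le_INR in Hb; simpl in Hb;
  (destruct a as [|[|[|[|]]]]; [| | | |lia]);
  try congruence;
  unfold w; fold L;
  first [ apply Rgt_not_eq; nra | apply Rlt_not_eq; nra ].
Qed.
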